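(* Let $N,M,k$ be positive integers with $M\le N$, $\omega=e^{2\pi i/N}$, and for $x,s\in\mathbb{Z}_N$ let $|\phi_{x,s}\rangle=\frac{1}{\sqrt M}\sum_{b=0}^{M-1}|b,x+bs\rangle\in\mathbb{C}^{N}\otimes\mathbb{C}^N$ and $\rho_s=\frac1N\sum_{x\in\mathbb{Z}_N}|\phi_{x,s}\rangle\langle\phi_{x,s}|$. Consider the pretty good measurement for the ensemble $\{\rho_s^{\otimes k}\}_{s\in\mathbb{Z}_N}$ with uniform prior, i.e. the POVM with elements $E_j=\Sigma^{-1/2}\rho_j^{\otimes k}\Sigma^{-1/2}$ where $\Sigma=\sum_{j\in\mathbb{Z}_N}\rho_j^{\otimes k}$ and the inverse square root is taken on the support of $\Sigma$. Then for every $s\in\mathbb{Z}_N$, $$\mathrm{tr}(E_s\rho_s^{\otimes k})=\frac{1}{M^kN^{k+1}}\sum_{x\in\mathbb{Z}_N^k}\Big(\sum_{w\in\mathbb{Z}_N}\sqrt{\eta^x_w}\Big)^2,$$ where $\eta^x_w:=|\{b\in\{0,\ldots,M-1\}^k : b\cdot x\equiv w \pmod N\}|$.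
   Context: The states $\rho_s$ arise from the generalized hidden shift problem: given $f:\{0,\ldots,M-1\}\times\mathbb{Z}_N\to S$, injective in $x$ for each fixed $b$, with $f(b,x)=f(b+1,x+s)$ for $b=0,\ldots,M-2$, one prepares the uniform superposition over $(b,x)$, computes $f$ and measures its value. Here $|b\rangle$ for $b\in\{0,\ldots,M-1\}$ are computational basis states of the first register. *)

(* Defs.v *)
From mathcomp Require Import all_boot all_order all_algebra.
From mathcomp Require Import algC.
From mathcomp Require Import spectral mxtens.
Set Implicit Arguments. Unset Strict Implicit. Unset Printing Implicit Defensive.
Import Order.TTheory GRing.Theory Num.Theory Num.Def.
Local Open Scope ring_scope.

(* Z_N is represented by 'I_N with arithmetic mod N on the underlying nats.
   C^N (x) C^N is 'cV_(N*N) with basis |b,y> at index mxtens_index (b, y). *)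

Fixpoint tdim (d k : nat) : nat := if k is k'.+1 then (d * tdim d k')%N else 1%N.

Fixpoint tpow (d : nat) (A : 'M[algC]_d) (k : nat) : 'M[algC]_(tdim d k) :=
  if k is k'.+1 then A *t tpow A k' else 1%:M.

Definition adj_mx m n (A : 'M[algC]_(m, n)) : 'M[algC]_(n, m) := (map_mx conjC A)^T.

Definition phi (N M : nat) (x s : 'I_N) : 'cV[algC]_(N * N) :=
  \col_i (let bi := mxtens_unindex i in
          if (bi.1 < M)%N && (nat_of_ord bi.2 == (x + bi.1 * s) %% N)%N
          then (sqrtC (M%:R : algC))^-1 else 0).

Definition rho (N M : nat) (s : 'I_N) : 'M[algC]_(N * N) :=
  (N%:R)^-1 *: \sum_(x < N) (phi M x s *m adj_mx (phi M x s)).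

(* Inverse square root taken on the support, via the spectral decomposition
   A = P^-1 diag(d) P (P unitary) of a normal matrix: eigenvalues d_i <> 0
   are replaced by d_i^{-1/2}, zero eigenvalues stay 0. *)
Definition pinv_sqrt n (A : 'M[algC]_n) : 'M[algC]_n :=
  let P := spectralmx A in
  let d := spectral_diag A in
  invmx P *m diag_mx (\row_i (if d 0 i == 0 then 0 else (sqrtC (d 0 i))^-1)) *m P.

Definition Sigma (N M k : nat) : 'M[algC]_(tdim (N * N) k) :=
  \sum_(j < N) tpow (rho M j) k.

Definition pgm (N M k : nat) (j : 'I_N) : 'M[algC]_(tdim (N * N) k) :=
  pinv_sqrt (Sigma N M k) *m tpow (rho M j) k *m pinv_sqrt (Sigma N M k).

Definition eta (N M k : nat) (x : {ffun 'I_k -> 'I_N}) (w : 'I_N) : nat :=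
  #|[set b : {ffun 'I_k -> 'I_M} | ((\sum_(i < k) b i * x i) %% N == w)%N]|.

(* Main.v *)
Require Import Defs.
From mathcomp Require Import all_boot all_order all_algebra.
From mathcomp Require Import algC cyclotomic.
From mathcomp Require Import spectral mxtens.
From mathcomp Require Import zify ring lra.
Import Order.TTheory GRing.Theory Num.Theory.
Local Open Scope ring_scope.
Set Implicit Arguments. Unset Strict Implicit. Unset Printing Implicit Defensive.


Definition omega (N : nat) : algC :=
  match N with 0 => 1 | n.+1 => projT1 (C_prim_root_exists (ltn0Sn n)) end.

Lemma omega_prim N : (0 < N)%N -> N.-primitive_root (omega N).
Proof. by case: N => // n _ /=; case: C_prim_root_exists. Qed.

Definition omx (N : nat) (z : int) : algC := omega N ^ z.

Lemma omega_neq0 N : (0 < N)%N -> omega N != 0.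
Proof. by move=> hN; rewrite (prim_root_eq0 (omega_prim hN)) -lt0n. Qed.

Lemma omega_unit N : (0 < N)%N -> omega N \is a GRing.unit.
Proof. by move=> hN; rewrite unitfE omega_neq0. Qed.

Lemma exD N a b : (0 < N)%N -> omx N (a + b) = omx N a * omx N b.
Proof. by move=> hN; rewrite /omx exprzDr // omega_unit. Qed.

Lemma ex0 N : omx N 0 = 1. Proof. by rewrite /omx expr0z. Qed.

Lemma ex_dvd N z : (0 < N)%N -> (N %| z)%Z -> omx N z = 1.
Proof.
move=> hN /dvdzP [q ->]; rewrite /omx mulrC -exprz_exp -exprnP.
by rewrite (prim_expr_order (omega_prim hN)) exp1rz.
Qed.

Lemma ex_mod N z : (0 < N)%N -> omx N z = omx N (z %% N)%Z.
Proof.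
move=> hN; rewrite {1}(divz_eq z N) exD // ex_dvd ?mul1r //.
by apply/dvdzP; exists (z %/ N)%Z.
Qed.

Lemma norm_omega N : (0 < N)%N -> `|omega N| = 1.
Proof.
move=> hN; have := prim_expr_order (omega_prim hN).
move=> /(congr1 (fun x => `|x|)); rewrite normrX normr1.
case: N hN => // n _ /eqP; rewrite geC0_unit_exp //; exact/eqP.
Qed.

Lemma conj_omega N : (0 < N)%N -> (omega N)^* = (omega N)^-1.
Proof.
move=> hN; apply: (@mulIf _ (omega N)); first by rewrite omega_neq0.
rewrite mulVf ?omega_neq0 // mulrC -normCK norm_omega // expr1n //.
Qed.

Lemma ex_conj N z : (0 < N)%N -> (omx N z)^* = omx N (- z).
Proof.
by move=> hN; rewrite /omx fmorphXz /= conj_omega // exprz_inv.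
Qed.

Lemma ex_neq1 N z : (0 < N)%N -> ~~ (N %| z)%Z -> omx N z != 1.
Proof.
move=> hN ndz; rewrite ex_mod //; apply/negP => /eqP h.
have r0 : (0 <= z %% N)%Z by rewrite modz_ge0 // -lt0n.
have rlt : (z %% N < N)%Z by rewrite ltz_pmod.
move: h ndz; rewrite -[(z %% N)%Z]gez0_abs //.
rewrite /omx -exprnP => /eqP h.
have := h; rewrite -[X in _ == X](expr0 (omega N)) (eq_prim_root_expr (omega_prim hN)).
rewrite mod0n modn_small; last by rewrite -ltz_nat gez0_abs.
move=> /eqP a0; have : (z %% N)%Z = 0 by rewrite -[LHS]gez0_abs // a0.
by move=> /dvdz_mod0P ->.
Qed.

Lemma char_sum N z : (0 < N)%N ->
  \sum_(t < N) omx N (t%:Z * z) = if (N %| z)%Z then N%:R else 0.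
Proof.
move=> hN.
have ep : forall t : nat, omx N (t%:Z * z) = omx N z ^+ t.
  by move=> t; rewrite /omx mulrC -exprz_exp.
under eq_bigr => t _ do rewrite ep.
case: ifP => dz.
  rewrite ex_dvd //; under eq_bigr => t _ do rewrite expr1n.
  by rewrite sumr_const card_ord.
have x1 : omx N z - 1 != 0 by rewrite subr_eq0 ex_neq1 // dz.
apply: (@mulfI _ (omx N z - 1)) => //; rewrite mulr0.
have -> : (omx N z - 1) * \sum_(t < N) omx N z ^+ t =
   \sum_(t < N) (omx N z ^+ t.+1 - omx N z ^+ t).
  rewrite mulr_sumr; apply: eq_bigr => t _; rewrite mulrBl mul1r exprS //.
rewrite -(big_mkord xpredT (fun t => omx N z ^+ t.+1 - omx N z ^+ t)) telescope_sumr // expr0 -ep.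
by rewrite ex_dvd ?subrr // dvdz_mulr ?dvdzz.
Qed.


Definition dot n (u v : 'cV[algC]_n) : algC := (adj_mx u *m v) 0 0.

Lemma adj_mxM m n p (A : 'M[algC]_(m, n)) (B : 'M[algC]_(n, p)) :
  adj_mx (A *m B) = adj_mx B *m adj_mx A.
Proof. by rewrite /adj_mx map_mxM trmx_mul. Qed.

Lemma adj_mxK m n (A : 'M[algC]_(m, n)) : adj_mx (adj_mx A) = A.
Proof. by apply/matrixP => i j; rewrite !mxE conjCK. Qed.

Lemma adj_tens m n p q (A : 'M[algC]_(m, n)) (B : 'M[algC]_(p, q)) :
  adj_mx (A *t B) = adj_mx A *t adj_mx B.
Proof. by rewrite /adj_mx map_mxT trmx_tens. Qed.

Lemma adj_sum m n I (r : seq I) (P : pred I) (F : I -> 'M[algC]_(m, n)) :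
  adj_mx (\sum_(i <- r | P i) F i) = \sum_(i <- r | P i) adj_mx (F i).
Proof.
apply/matrixP => i j; rewrite !mxE !summxE rmorph_sum.
by apply: eq_bigr => x _; rewrite !mxE.
Qed.

Lemma adj_scale m n c (A : 'M[algC]_(m, n)) : adj_mx (c *: A) = c^* *: adj_mx A.
Proof. by apply/matrixP => i j; rewrite !mxE rmorphM. Qed.

Lemma tensmx_suml m n p q I (r : seq I) (P : pred I) (F : I -> 'M[algC]_(m, n))
   (B : 'M[algC]_(p, q)) :
  (\sum_(i <- r | P i) F i) *t B = \sum_(i <- r | P i) (F i *t B).
Proof.
apply/matrixP => i j; rewrite !mxE !summxE mulr_suml.
by apply: eq_bigr => x _; rewrite !mxE.
Qed.

Lemma tensmx_sumr m n p q I (r : seq I) (P : pred I) (F : I -> 'M[algC]_(p, q))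
   (A : 'M[algC]_(m, n)) :
  A *t (\sum_(i <- r | P i) F i) = \sum_(i <- r | P i) (A *t F i).
Proof.
apply/matrixP => i j; rewrite !mxE !summxE mulr_sumr.
by apply: eq_bigr => x _; rewrite !mxE.
Qed.

Lemma tensmxZl m n p q c (A : 'M[algC]_(m, n)) (B : 'M[algC]_(p, q)) :
  (c *: A) *t B = c *: (A *t B).
Proof. by apply/matrixP => i j; rewrite !mxE mulrA. Qed.

Lemma tensmxZr m n p q c (A : 'M[algC]_(m, n)) (B : 'M[algC]_(p, q)) :
  A *t (c *: B) = c *: (A *t B).
Proof. by apply/matrixP => i j; rewrite !mxE mulrCA. Qed.

Lemma rank1_mul n (u v y : 'cV[algC]_n) : u *m adj_mx v *m y = dot v y *: u.
Proof.
rewrite -mulmxA [adj_mx v *m y]mx11_scalar mul_mx_scalar; reflexivity.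
Qed.

Lemma tens11 (a b : 'M[algC]_1) : (a *t b) 0 0 = a 0 0 * b 0 0.
Proof.
by rewrite !mxE !(ord1 (mxtens_unindex _).1) !(ord1 (mxtens_unindex _).2).
Qed.

Lemma dot_tens m n (u v : 'cV[algC]_m) (U V : 'cV[algC]_n) :
  dot (u *t U : 'cV_(m * n)) (v *t V) = dot u v * dot U V.
Proof. rewrite /dot (adj_tens u U) (tensmx_mul (adj_mx u) (adj_mx U) v V). exact: tens11. Qed.

Fixpoint tvec (d k : nat) : ('I_k -> 'cV[algC]_d) -> 'cV[algC]_(tdim d k) :=
  match k return ('I_k -> 'cV[algC]_d) -> 'cV[algC]_(tdim d k) with
  | 0 => fun _ => 1%:M
  | k'.+1 => fun F => (F ord0 *t tvec (fun i => F (lift ord0 i)) : 'M_(d * tdim d k', 1))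
  end.

Lemma eq_tvec d k (F G : 'I_k -> 'cV[algC]_d) : (forall i, F i = G i) -> tvec F = tvec G.
Proof.
elim: k F G => [|k IH] F G h //=.
by rewrite h (IH _ (fun i => G (lift ord0 i))).
Qed.

Lemma dot_tvec d k (F G : 'I_k -> 'cV[algC]_d) :
  dot (tvec F) (tvec G) = \prod_(i < k) dot (F i) (G i).
Proof.
elim: k F G => [|k IH] F G /=.
  by rewrite big_ord0 /dot /adj_mx mulmx1 !mxE conjC1 /=.
by rewrite (dot_tens (F ord0)) IH big_ord_recl.
Qed.


Definition fcons N k (m : 'I_N) (F : {ffun 'I_k -> 'I_N}) : {ffun 'I_k.+1 -> 'I_N} :=
  [ffun i => if unlift ord0 i is Some j then F j else m].

Lemma fcons0 N k (m : 'I_N) (F : {ffun 'I_k -> 'I_N}) : fcons m F ord0 = m.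
Proof. by rewrite ffunE unlift_none. Qed.

Lemma fconsS N k (m : 'I_N) (F : {ffun 'I_k -> 'I_N}) i : fcons m F (lift ord0 i) = F i.
Proof. by rewrite ffunE liftK. Qed.

Lemma sum_ffunS (R : nmodType) N k (h : {ffun 'I_k.+1 -> 'I_N} -> R) :
  \sum_(G : {ffun 'I_k.+1 -> 'I_N}) h G =
  \sum_(m < N) \sum_(F : {ffun 'I_k -> 'I_N}) h (fcons m F).
Proof.
rewrite pair_big /=.
rewrite (reindex (fun p : 'I_N * {ffun 'I_k -> 'I_N} => fcons p.1 p.2)) //=.
exists (fun G : {ffun 'I_k.+1 -> 'I_N} => (G ord0, [ffun j => G (lift ord0 j)])).
  move=> [m F] _ /=; congr (_, _); first by rewrite fcons0.
  by apply/ffunP => j; rewrite ffunE fconsS.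
move=> G _; apply/ffunP => i; rewrite ffunE.
by case: unliftP => [j ->|->]; rewrite ?ffunE.
Qed.

Lemma tpow_sum d N k c (x : 'I_N -> 'cV[algC]_d) :
  tpow (c *: \sum_(m < N) x m *m adj_mx (x m)) k =
  c ^+ k *: \sum_(F : {ffun 'I_k -> 'I_N})
     tvec (fun i => x (F i)) *m adj_mx (tvec (fun i => x (F i))).
Proof.
elim: k => [|k IH] /=.
  rewrite expr0 scale1r sumr_const card_ffun card_ord card_ord expn0.
  by rewrite /adj_mx map_mx1 trmx1 mulmx1.
rewrite IH tensmxZl tensmxZr scalerA -exprS; congr (_ *: _).
rewrite sum_ffunS tensmx_suml; apply: eq_bigr => m _.
rewrite tensmx_sumr; apply: eq_bigr => F _.
rewrite (eq_tvec (F := fun i => x (fcons m F (lift ord0 i))) (G := fun i => x (F i))); last first.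
  by move=> i; rewrite fconsS.
rewrite fcons0.
rewrite (adj_tens (x m) (tvec (fun i => x (F i)))).
by rewrite (tensmx_mul (x m) (tvec (fun i => x (F i)))).
Qed.


Definition gisq (l : algC) : algC := if l == 0 then 0 else (sqrtC l)^-1.

Local Open Scope sesquilinear_scope.
Lemma herm_normal n (A : 'M[algC]_n) : adj_mx A = A -> A \is normalmx.
Proof.
move=> h; apply/normalmxP.
have -> : A ^t* = adj_mx A by rewrite /adj_mx map_trmx.
by rewrite h.
Qed.
Local Close Scope sesquilinear_scope.

Lemma pinv_eig n (A : 'M[algC]_n) (v : 'cV[algC]_n) lam :
  A \is normalmx -> A *m v = lam *: v -> pinv_sqrt A *m v = gisq lam *: v.
Proof.
move=> nA Av; have AE := orthomx_spectralP nA.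
rewrite /pinv_sqrt.
set P := spectralmx A in AE *; set d := spectral_diag A in AE *.
have Pu : P \in unitmx by exact: spectral_unit.
set w := P *m v.
have Dw : diag_mx d *m w = lam *: w.
  have := congr1 (mulmx P) Av; rewrite {1}AE -!mulmxA mulKVmx //.
  by rewrite /w mulmxA => ->; rewrite scalemxAr.
have wE : w = P *m v by []. clearbody w.
have Dg : diag_mx (\row_i (if d 0 i == 0 then 0 else (sqrtC (d 0 i))^-1)) *m w
          = gisq lam *: w.
  apply/matrixP => i j; rewrite mul_diag_mx !mxE.
  have /matrixP/(_ i j) := Dw; rewrite mul_diag_mx !mxE => e.
  have [->|wn0] := eqVneq (w i j) 0; first by rewrite !mulr0.
  have -> : d 0 i = lam by apply: (mulIf wn0).
  by rewrite /gisq.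
by rewrite -!mulmxA -wE Dg -scalemxAr wE mulKmx.
Qed.


Lemma sum_tens (R : nmodType) m n (F : 'I_(m * n) -> R) :
  \sum_i F i = \sum_(a < m) \sum_(b < n) F (mxtens_index (a, b)).
Proof.
rewrite (pair_big xpredT xpredT (fun a b => F (mxtens_index (a, b)))) /=.
rewrite (reindex (fun p : 'I_m * 'I_n => @mxtens_index m n p)) /=.
  by apply: eq_bigr => -[a b].
by exists (@mxtens_unindex m n) => p _; rewrite ?mxtens_indexK ?mxtens_unindexK.
Qed.

Lemma count_x N p p' (y y' : nat) : (0 < N)%N -> (y < N)%N -> (y' < N)%N ->
  \sum_(x < N) (((y == (x + p) %% N) && (y' == (x + p') %% N))%N : nat)%:R
   = ((y + p' == y' + p %[mod N])%N : nat)%:R :> algC.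
Proof.
move=> hN hy hy'.
pose x0 := ((y + (N - p %% N)) %% N)%N.
have x0lt : (x0 < N)%N by rewrite ltn_mod.
have hx0 : ((x0 + p) %% N = y)%N.
  rewrite /x0 modnDml {2}(divn_eq p N).
  have hr : (p %% N < N)%N by rewrite ltn_pmod.
  move: hr; set r := (p %% N)%N; set q := (p %/ N)%N => hr.
  have -> : (y + (N - r) + (q * N + r) = (q + 1) * N + y)%N by nia.
  by rewrite modnMDl modn_small.
have uniq : forall x : 'I_N, (y == (x + p) %% N)%N = (x == Ordinal x0lt).
  move=> x; apply/eqP/eqP => [h|->]; last by rewrite hx0.
  apply: val_inj => /=; rewrite -(modn_small (ltn_ord x)) -(modn_small x0lt).
  apply/eqP; rewrite -(eqn_modDr p) ; apply/eqP; by rewrite -h hx0.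
under eq_bigr => x _ do rewrite uniq.
rewrite (bigD1 (Ordinal x0lt)) //= eqxx /= big1 ?addr0; last first.
  by move=> x /negbTE ->.
congr (_%:R); congr nat_of_bool.
rewrite -hx0 -{1}(modn_small hy') modnDml addnAC eqn_modDr eq_sym //.
Qed.


Definition cst (N M : nat) : algC := (sqrtC ((M * N)%:R))^-1.

Definition avec N M (m j : 'I_N) : 'cV[algC]_(N * N) :=
  \col_i (if ((mxtens_unindex i).1 < M)%N then
     cst N M * omx N (m%:Z * ((mxtens_unindex i).2%:Z - j%:Z * (mxtens_unindex i).1%:Z))
   else 0).

Lemma avecE N M (m j b y : 'I_N) : avec M m j (mxtens_index (b, y)) 0 =
  if (b < M)%N then cst N M * omx N (m%:Z * (y%:Z - j%:Z * b%:Z)) else 0.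
Proof. by rewrite mxE mxtens_indexK. Qed.

Lemma cst_conj N M : (cst N M)^* = cst N M.
Proof. by rewrite geC0_conj // invr_ge0 sqrtC_ge0 ler0n. Qed.

Lemma cst2 N M : cst N M * cst N M = ((M * N)%:R)^-1.
Proof. by rewrite /cst -invfM -expr2 sqrtCK. Qed.

Lemma adjE m n (u : 'M[algC]_(m, n)) i j : adj_mx u i j = (u j i)^*.
Proof. by rewrite !mxE. Qed.

Lemma dot_sum n (u v : 'cV[algC]_n) : dot u v = \sum_i (u i 0)^* * v i 0.
Proof. by rewrite /dot mxE; apply: eq_bigr => i _; rewrite adjE. Qed.

Lemma dvd_ord N (m m' : 'I_N) : (0 < N)%N -> (N %| m'%:Z - m%:Z)%Z = (m' == m).
Proof.
move=> hN; rewrite -eqz_mod_dvd !modz_small ?ltz_nat ?ltn_ord //.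
Qed.

Lemma dot_avec N M (m j m' j' : 'I_N) : (0 < N)%N -> (M <= N)%N ->
  dot (avec M m j) (avec M m' j') =
  if m == m' then (M%:R)^-1 * \sum_(b < M) omx N (m%:Z * b%:Z * (j%:Z - j'%:Z)) else 0.
Proof.
move=> hN hMN; rewrite dot_sum sum_tens.
transitivity (\sum_(b < N) if (b < M)%N then
   ((M * N)%:R)^-1 * omx N (b%:Z * (m%:Z * j%:Z - m'%:Z * j'%:Z)) *
   \sum_(y < N) omx N (y%:Z * (m'%:Z - m%:Z)) else 0).
  apply: eq_bigr => b _; rewrite mulr_sumr; case: ifP => hb.
    apply: eq_bigr => y _; rewrite !avecE hb rmorphM /= cst_conj ex_conj //.
    rewrite mulrACA cst2 -mulrA -!exD //; congr (_ * omx N _); ring.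
  by rewrite big1 // => y _; rewrite !avecE hb conjC0 mul0r.
rewrite -big_mkcond /=.
under eq_bigr => b _ do rewrite char_sum // dvd_ord //.
rewrite eq_sym; case: eqP => [->|_]; last first.
  by rewrite big1 // => b _; rewrite mulr0.
rewrite (big_ord_widen N (fun b : nat => omx N (m'%:Z * b%:Z * (j%:Z - j'%:Z))) hMN).
rewrite mulr_sumr; apply: eq_bigr => b _.
have nN : (N%:R : algC) != 0 by rewrite pnatr_eq0 -lt0n.
rewrite natrM invfM (_ : omx _ _ = omx N (m'%:Z * b%:Z * (j%:Z - j'%:Z))); last by congr omx; ring.
by rewrite mulrAC -(mulrA (M%:R^-1)) mulVf // mulr1.
Qed.

Lemma rank1E m (u v : 'cV[algC]_m) i i' : (u *m adj_mx v) i i' = u i 0 * (v i' 0)^*.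
Proof. by rewrite mxE big_ord1 adjE. Qed.

Lemma rho_avec N M (s : 'I_N) : (0 < N)%N -> (0 < M)%N ->
  rho M s = (N%:R)^-1 *: \sum_(m < N) avec M m s *m adj_mx (avec M m s).
Proof.
move=> hN hM; rewrite /rho; congr (_ *: _); apply/matrixP => i i'.
case: (mxtens_indexP i) => b y; case: (mxtens_indexP i') => b' y'.
rewrite !summxE.
under eq_bigr => x _ do rewrite rank1E !mxE !mxtens_indexK /=.
under [RHS]eq_bigr => m _ do rewrite rank1E !avecE.
have sM : (sqrtC (M%:R) : algC)^-1 ^* = (sqrtC (M%:R))^-1.
  by rewrite geC0_conj // invr_ge0 sqrtC_ge0 ler0n.
case: (boolP (b < M)%N) => hb /=; last first.
  rewrite big1 ?[RHS]big1 // => m _; by rewrite mul0r.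
case: (boolP (b' < M)%N) => hb' /=; last first.
  by rewrite big1 ?[RHS]big1 // => m _; rewrite conjC0 mulr0.
transitivity (\sum_(x < N) ((((nat_of_ord y == (x + b * s) %% N) && (nat_of_ord y' == (x + b' * s) %% N))%N : nat)%:R
     * (M%:R)^-1 : algC)).
  apply: eq_bigr => x _.
  case: eqP => _; case: eqP => _ /=; rewrite ?conjC0 ?mulr0 ?mul0r //.
  by rewrite sM -expr2 exprVn sqrtCK mul1r.
rewrite -mulr_suml count_x //.
transitivity (\sum_(m < N) ((M * N)%:R)^-1 *
   omx N (m%:Z * ((y%:Z - s%:Z * b%:Z) - (y'%:Z - s%:Z * b'%:Z)))); last first.
  apply: eq_bigr => m _; symmetry; rewrite rmorphM /= cst_conj ex_conj // mulrACA cst2 -exD //.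
  by congr (_ * omx N _); ring.
rewrite -mulr_sumr char_sum //.
have -> : (N %| y%:Z - s%:Z * b%:Z - (y'%:Z - s%:Z * b'%:Z))%Z =
          (y + b' * s == y' + b * s %[mod N])%N.
  have -> : y%:Z - s%:Z * b%:Z - (y'%:Z - s%:Z * b'%:Z) = (y + b' * s)%N%:Z - (y' + b * s)%N%:Z.
    by rewrite !PoszD !PoszM; ring.
  by rewrite -eqz_mod_dvd !modz_nat eqz_nat.
case: (y + b' * s == y' + b * s %[mod N])%N; rewrite ?mulr0 ?mul0r //.
by rewrite natrM invfM mul1r -mulrA mulVf ?mulr1 // pnatr_eq0 -lt0n.
Qed.


Definition AF N M k (F : {ffun 'I_k -> 'I_N}) (j : 'I_N) : 'cV[algC]_(tdim (N * N) k) :=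
  tvec (fun i => avec M (F i) j).

Lemma tpow_rho N M k (j : 'I_N) : (0 < N)%N -> (0 < M)%N ->
  tpow (rho M j) k = ((N%:R)^-1)^+k *: \sum_(F : {ffun 'I_k -> 'I_N}) AF M F j *m adj_mx (AF M F j).
Proof.
move=> hN hM; rewrite rho_avec //.
exact: (tpow_sum k ((N%:R)^-1) (fun m => avec M m j)).
Qed.

Lemma prod_ex N k (z : 'I_k -> int) : (0 < N)%N ->
  \prod_(i < k) omx N (z i) = omx N (\sum_(i < k) z i).
Proof.
move=> hN; elim/big_rec2: _ => [|i x y _ ->]; first by rewrite ex0.
by rewrite exD.
Qed.

Lemma Posz_sum I (r : seq I) (P : pred I) (f : I -> nat) :
  ((\sum_(i <- r | P i) f i)%N)%:Z = \sum_(i <- r | P i) (f i)%:Z.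
Proof. by elim/big_rec2: _ => // i x y _ <-; rewrite PoszD. Qed.

Lemma group_mod (T : finType) N (S : T -> nat) (g : nat -> algC) : (0 < N)%N ->
  \sum_(B : T) g (S B %% N)%N =
  \sum_(w < N) (#|[set B | (S B %% N == w)%N]|)%:R * g w.
Proof.
move=> hN.
rewrite (partition_big (fun B => Ordinal (ltn_pmod (S B) hN)) xpredT) //=.
apply: eq_bigr => w _.
rewrite (eq_bigr (fun _ => g w)); last by move=> B /eqP <-.
rewrite sumr_const [RHS]mulr_natl; congr (_ *+ _).
by rewrite cardsE; apply: eq_card => B.
Qed.

Lemma dotA N M k (F G : {ffun 'I_k -> 'I_N}) (j j' : 'I_N) : (0 < N)%N -> (M <= N)%N ->
  dot (AF M F j) (AF M G j') =
  if F == G then ((M%:R)^-1)^+k *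
     \sum_(w < N) (eta M F w)%:R * omx N (w%:Z * (j%:Z - j'%:Z)) else 0.
Proof.
move=> hN hMN; rewrite /AF dot_tvec.
under eq_bigr => i _ do rewrite dot_avec //.
case: eqP => [<-|nFG]; last first.
  case: (pickP (fun i => F i != G i)) => [i hi|h].
    by rewrite (bigD1 i) //= (negbTE hi) mul0r.
  by case: nFG; apply/ffunP => i; apply/eqP; move: (h i) => /= /negbFE.
under eq_bigr => i _ do rewrite eqxx.
rewrite big_split /= prodr_const card_ord; congr (_ * _).
rewrite bigA_distr_bigA /=.
under eq_bigr => B _ do rewrite prod_ex //.
have eqB : forall B : {ffun 'I_k -> 'I_M},
    \sum_(i < k) (F i)%:Z * (B i)%:Z * (j%:Z - j'%:Z) =
    ((\sum_(i < k) B i * F i)%N)%:Z * (j%:Z - j'%:Z).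
  move=> B; rewrite Posz_sum mulr_suml; apply: eq_bigr => i _.
  by rewrite (mulrC (F i)%:Z).
under eq_bigr => B _ do rewrite eqB.
under eq_bigr => B _ do rewrite ex_mod // -modzMml modz_nat -ex_mod //.
rewrite (group_mod (fun B : {ffun 'I_k -> 'I_M} => (\sum_(i < k) B i * F i)%N)
          (fun w => omx N (w%:Z * (j%:Z - j'%:Z)))) //.
Qed.

Lemma dot_sumr n (u : 'cV[algC]_n) I (r : seq I) (P : pred I) (c : I -> algC) (v : I -> 'cV[algC]_n) :
  dot u (\sum_(i <- r | P i) c i *: v i) = \sum_(i <- r | P i) c i * dot u (v i).
Proof.
rewrite /dot mulmx_sumr summxE; apply: eq_bigr => i _.
by rewrite -scalemxAr mxE.
Qed.

Lemma dot_scaler n (u v : 'cV[algC]_n) c : dot u (c *: v) = c * dot u v.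
Proof. by rewrite /dot -scalemxAr mxE. Qed.

Definition YF N M k (F : {ffun 'I_k -> 'I_N}) (w : 'I_N) : 'cV[algC]_(tdim (N * N) k) :=
  \sum_(j < N) omx N (w%:Z * j%:Z) *: AF M F j.

Lemma dotAY N M k (F G : {ffun 'I_k -> 'I_N}) (j' w : 'I_N) : (0 < N)%N -> (M <= N)%N ->
  dot (AF M G j') (YF M F w) =
  if G == F then ((M%:R)^-1)^+k * N%:R * (eta M F w)%:R * omx N (w%:Z * j'%:Z) else 0.
Proof.
move=> hN hMN; rewrite /YF dot_sumr.
under eq_bigr => j _ do rewrite dotA //.
case: eqP => [->|_]; last by rewrite big1 // => j _; rewrite mulr0.
transitivity (\sum_(j < N) \sum_(w' < N) (((M%:R)^-1)^+k * (eta M F w')%:R * omx N (w'%:Z * j'%:Z)) *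
   omx N (j%:Z * (w%:Z - w'%:Z))).
  apply: eq_bigr => j _; rewrite mulr_sumr mulr_sumr; apply: eq_bigr => w' _.
  have e : omx N (w%:Z * j%:Z) * omx N (w'%:Z * (j'%:Z - j%:Z)) =
           omx N (w'%:Z * j'%:Z) * omx N (j%:Z * (w%:Z - w'%:Z)).
    by rewrite -!exD //; congr omx; ring.
  transitivity (((M%:R)^-1)^+k * (eta M F w')%:R * (omx N (w%:Z * j%:Z) * omx N (w'%:Z * (j'%:Z - j%:Z)))).
    ring.
  rewrite e; ring.
rewrite exchange_big /=.
under eq_bigr => w' _ do rewrite -mulr_sumr char_sum // dvd_ord //.
rewrite (bigD1 w) //= eqxx big1 ?addr0; last first.
  by move=> w' hw; rewrite eq_sym (negbTE hw) mulr0.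
ring.
Qed.


Definition lamF N M k (F : {ffun 'I_k -> 'I_N}) (w : 'I_N) : algC :=
  ((N%:R)^-1)^+k * ((M%:R)^-1)^+k * N%:R * (eta M F w)%:R.

Lemma SigmaY N M k (F : {ffun 'I_k -> 'I_N}) (w : 'I_N) :
  (0 < N)%N -> (0 < M)%N -> (M <= N)%N ->
  Sigma N M k *m YF M F w = lamF M F w *: YF M F w.
Proof.
move=> hN hM hMN; rewrite /Sigma mulmx_suml.
under eq_bigr => j' _ do rewrite tpow_rho // -scalemxAl mulmx_suml.
under eq_bigr => j' _ do under eq_bigr => G _ do rewrite rank1_mul dotAY //.
rewrite /YF scaler_sumr; apply: eq_bigr => j' _.
rewrite (bigD1 F) //= eqxx big1 ?addr0; last first.
  by move=> G /negbTE ->; rewrite scale0r.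
rewrite !scalerA; congr (_ *: _); rewrite /lamF; ring.
Qed.

Lemma A_inv N M k (F : {ffun 'I_k -> 'I_N}) (s : 'I_N) : (0 < N)%N ->
  AF M F s = (N%:R)^-1 *: \sum_(w < N) omx N (- (w%:Z * s%:Z)) *: YF M F w.
Proof.
move=> hN; rewrite /YF.
transitivity ((N%:R)^-1 *: \sum_(j < N) (\sum_(w < N) omx N (w%:Z * (j%:Z - s%:Z))) *: AF M F j); last first.
  congr (_ *: _).
  under [RHS]eq_bigr => w _ do rewrite scaler_sumr.
  rewrite [RHS]exchange_big /=; apply: eq_bigr => j _.
  rewrite scaler_suml; apply: eq_bigr => w _.
  by rewrite scalerA -exD //; congr (omx N _ *: _); ring.
under eq_bigr => j _ do rewrite char_sum // dvd_ord //.
rewrite (bigD1 s) //= eqxx big1 ?addr0; last first.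
  by move=> j /negbTE ->; rewrite scale0r.
by rewrite scalerA mulVf ?scale1r // pnatr_eq0 -lt0n.
Qed.

Lemma Sigma_herm N M k : (0 < N)%N -> (0 < M)%N ->
  adj_mx (Sigma N M k) = Sigma N M k.
Proof.
move=> hN hM; rewrite /Sigma adj_sum; apply: eq_bigr => j _.
rewrite tpow_rho // adj_scale adj_sum rmorphXn /= geC0_conj ?invr_ge0 ?ler0n //.
congr (_ *: _); apply: eq_bigr => F _.
by rewrite adj_mxM adj_mxK.
Qed.

Lemma S_Y N M k (F : {ffun 'I_k -> 'I_N}) (w : 'I_N) :
  (0 < N)%N -> (0 < M)%N -> (M <= N)%N ->
  pinv_sqrt (Sigma N M k) *m YF M F w = gisq (lamF M F w) *: YF M F w.
Proof.
move=> hN hM hMN; apply: pinv_eig; first exact/herm_normal/Sigma_herm.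
exact: SigmaY.
Qed.

Definition cF N M k (F : {ffun 'I_k -> 'I_N}) : algC :=
  ((M%:R)^-1)^+k * \sum_(w < N) gisq (lamF M F w) * (eta M F w)%:R.

Lemma dotASA N M k (F G : {ffun 'I_k -> 'I_N}) (s : 'I_N) :
  (0 < N)%N -> (0 < M)%N -> (M <= N)%N ->
  dot (AF M G s) (pinv_sqrt (Sigma N M k) *m AF M F s) = if G == F then cF M F else 0.
Proof.
move=> hN hM hMN; rewrite [AF M F s](A_inv M F s hN) -scalemxAr mulmx_sumr.
under eq_bigr => w _ do rewrite -scalemxAr S_Y // scalerA.
rewrite dot_scaler dot_sumr.
under eq_bigr => w _ do rewrite dotAY //.
have [eGF|nGF] := eqVneq G F; last by rewrite big1 ?mulr0 // => w _; rewrite mulr0.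
rewrite /cF mulr_sumr mulr_sumr; apply: eq_bigr => w _.
have e : omx N (- (w%:Z * s%:Z)) * omx N (w%:Z * s%:Z) = 1 by rewrite -exD // addNr ex0.
have nN : (N%:R : algC) != 0 by rewrite pnatr_eq0 -lt0n.
transitivity ((N%:R)^-1 * N%:R * (omx N (- (w%:Z * s%:Z)) * omx N (w%:Z * s%:Z)) *
  (((M%:R)^-1)^+k * (gisq (lamF M F w) * (eta M F w)%:R))); first ring.
by rewrite e mulVf // !mul1r.
Qed.


Lemma tr_rank1 n (u v : 'cV[algC]_n) : \tr (u *m adj_mx v) = dot v u.
Proof.
rewrite /mxtrace dot_sum; apply: eq_bigr => i _; by rewrite rank1E mulrC.
Qed.

Lemma trace_main N M k (s : 'I_N) : (0 < N)%N -> (0 < M)%N -> (M <= N)%N ->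
  \tr (pgm M k s *m tpow (rho M s) k) =
  (((N%:R)^-1)^+k)^+2 * \sum_(F : {ffun 'I_k -> 'I_N}) (cF M F)^+2.
Proof.
move=> hN hM hMN; rewrite /pgm.
set S := pinv_sqrt (Sigma N M k).
have SE : S = pinv_sqrt (Sigma N M k) by [].
clearbody S.
set c := ((N%:R)^-1)^+k.
rewrite tpow_rho //.
set X := S *m _ *m S.
rewrite -scalemxAr mulmx_sumr linearZ /= linear_sum /=.
have XA : forall G, X *m AF M G s =
   c *: \sum_(F : {ffun 'I_k -> 'I_N}) dot (AF M F s) (S *m AF M G s) *: (S *m AF M F s).
  move=> G; rewrite /X -!mulmxA -scalemxAl -scalemxAr /c; congr (_ *: _).
  rewrite mulmx_suml mulmx_sumr; apply: eq_bigr => F _.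
  by rewrite rank1_mul -scalemxAr.
under eq_bigr => G _ do rewrite mulmxA tr_rank1 XA dot_scaler dot_sumr.
rewrite /c -mulr_sumr [in RHS]expr2 -mulrA; congr (_ * _); congr (_ * _).
apply: eq_bigr => G _.
rewrite SE (bigD1 G) //= big1 ?addr0.
  by rewrite !dotASA // eqxx expr2.
by move=> F hF; rewrite !dotASA // (negbTE hF) mul0r.
Qed.


Lemma gisq_mul (r : algC) (n : nat) : 0 < r ->
  gisq (r * n%:R) * n%:R = sqrtC (n%:R) / sqrtC r.
Proof.
move=> r0; have [->|n0] := eqVneq n 0%N; first by rewrite mulr0 sqrtC0 mul0r.
have nR : (n%:R : algC) != 0 by rewrite pnatr_eq0.
have rn : r * n%:R != 0 by rewrite mulf_neq0 // lt0r_neq0.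
rewrite /gisq (negbTE rn) sqrtCM ?qualifE /= ?ler0n ?ltW //.
have hsr : sqrtC r != 0 by rewrite sqrtC_eq0 lt0r_neq0.
have hsn : sqrtC (n%:R : algC) != 0 by rewrite sqrtC_eq0.
rewrite -{2}(sqrtCK (n%:R)).
field; by rewrite hsr hsn.
Qed.

Lemma cF_eq N M k (F : {ffun 'I_k -> 'I_N}) : (0 < N)%N -> (0 < M)%N ->
  let r := ((N%:R)^-1)^+k * ((M%:R)^-1)^+k * N%:R : algC in
  cF M F = ((M%:R)^-1)^+k / sqrtC r * \sum_(w < N) sqrtC ((eta M F w)%:R).
Proof.
move=> hN hM r.
have r0 : 0 < r by rewrite /r !mulr_gt0 ?exprn_gt0 ?invr_gt0 ?ltr0n.
rewrite /cF -mulrA; congr (_ * _); rewrite mulr_sumr; apply: eq_bigr => w _.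
by rewrite /lamF -/r gisq_mul // mulrC.
Qed.

Theorem mainTheorem6 (N M k : nat) (hN : (0 < N)%N) (hM : (0 < M)%N)
    (hk : (0 < k)%N) (hMN : (M <= N)%N) (s : 'I_N) :
  \tr (pgm M k s *m tpow (rho M s) k) =
    ((M ^ k * N ^ k.+1)%:R)^-1 *
    \sum_(x : {ffun 'I_k -> 'I_N})
       (\sum_(w < N) sqrtC ((eta M x w)%:R : algC)) ^+ 2.
Proof.
rewrite trace_main //.
set r := ((N%:R)^-1)^+k * ((M%:R)^-1)^+k * N%:R : algC.
have r0 : 0 < r by rewrite /r !mulr_gt0 ?exprn_gt0 ?invr_gt0 ?ltr0n.
have hq : sqrtC r != 0 by rewrite sqrtC_eq0 lt0r_neq0.
have key : forall F : {ffun 'I_k -> 'I_N}, cF M F ^+ 2 =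
   (((M%:R)^-1)^+k)^+2 / r * (\sum_(w < N) sqrtC ((eta M F w)%:R : algC)) ^+ 2.
  move=> F; rewrite cF_eq // -/r -{2}(sqrtCK r).
  by field.
under eq_bigr => F _ do rewrite key.
rewrite -mulr_sumr mulrA; congr (_ * _).
have nN : (N%:R : algC) != 0 by rewrite pnatr_eq0 -lt0n.
have nM : (M%:R : algC) != 0 by rewrite pnatr_eq0 -lt0n.
have nNk : (N%:R : algC) ^+ k != 0 by rewrite expf_neq0.
have nMk : (M%:R : algC) ^+ k != 0 by rewrite expf_neq0.
rewrite /r !exprVn natrM !natrX (exprS (N%:R) k).
move: nNk nMk; set a := (N%:R : algC) ^+ k; set b := (M%:R : algC) ^+ k => nNk nMk.
by field; rewrite nN nNk nMk.
Qed.
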